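(* Let $\lambda\in\mathcal P_\epsilon(N)$ and suppose Case 2 of the Kempken–Spaltenstein algorithm occurs for $\lambda$ at index $i$. Then $\Delta(\lambda^{(i)})=\Delta(\lambda)\setminus\{(i,i+1)\}$. If moreover $(i,i+1)$ is a good 2-step of $\lambda$, then $s(\lambda^{(i)})=s(\lambda)$.
   Context: $\mathcal P_\epsilon(N)$ ($\epsilon=\pm1$) is the set of partitions $\lambda=(\lambda_1\ge\dots\ge\lambda_n\ge1)$ of $N$ in which every part $m$ with $\epsilon(-1)^m=1$ occurs with even multiplicity; conventions $\lambda_0=0$, $\lambda_i=0$ for $i>n$. $s(\lambda)=\sum_{i=1}^n\lfloor(\lambda_i-\lambda_{i+1})/2\rfloor$. A 2-step of $\lambda$ is a pair $(i,i+1)$, $1\le i<n$, with $\epsilon(-1)^{\lambda_i}=\epsilon(-1)^{\lambda_{i+1}}=-1$, $\lambda_{i-1}\ne\lambda_i$, $\lambda_{i+1}\ne\lambda_{i+2}$; $\Delta(\lambda)$ is the set of 2-steps. A 2-step $(i,i+1)$ is bad if ($i>1$ and $\lambda_{i-1}-\lambda_i$ is even) or $\lambda_{i+1}-\lambda_{i+2}$ is even, and good otherwise. Case 2 occurs at $i$ if $(i,i+1)\in\Delta(\lambda)$ and $\lambda_i=\lambda_{i+1}$; then $\lambda^{(i)}=(\lambda_1-2,\dots,\lambda_{i-1}-2,\lambda_i-1,\lambda_{i+1}-1,\lambda_{i+2},\dots,\lambda_n)$ with zero parts discarded, an element of $\mathcal P_\epsilon(N-2i)$. *)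

(* Defs.v *)
From mathcomp Require Import all_boot all_order all_algebra.
Set Implicit Arguments. Unset Strict Implicit. Unset Printing Implicit Defensive.
Import GRing.Theory Num.Theory.

(* A partition lambda = (lambda_1 >= ... >= lambda_n >= 1) is the list
   [:: lambda_1; ...; lambda_n].  Indices are 1-based:
   part s 0 = 0 (convention lambda_0 = 0), part s i = lambda_i for 1 <= i <= n,
   part s i = 0 for i > n. *)
Definition part (s : seq nat) (i : nat) : nat :=
  if i is j.+1 then nth 0%N s j else 0%N.

Definition sgn (eps : int) (m : nat) : int := (eps * (-1) ^+ m)%R.

Definition inP (eps : int) (N : nat) (s : seq nat) : Prop :=
  [/\ sorted geq s, all (fun x => 0 < x)%N s, sumn s = N &
      forall m : nat, sgn eps m = 1%R -> ~~ odd (count_mem m s)].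

Definition sfun (s : seq nat) : nat :=
  \sum_(1 <= i < (size s).+1) ((part s i - part s i.+1) %/ 2).

Definition is2step (eps : int) (s : seq nat) (i : nat) : bool :=
  [&& (1 <= i)%N, (i < size s)%N,
      sgn eps (part s i) == (-1)%R, sgn eps (part s i.+1) == (-1)%R,
      part s i.-1 != part s i & part s i.+1 != part s i.+2].

Definition bad2step (s : seq nat) (i : nat) : bool :=
  ((1 < i)%N && ~~ odd (part s i.-1 - part s i)) ||
  ~~ odd (part s i.+1 - part s i.+2).

Definition good2step (eps : int) (s : seq nat) (i : nat) : bool :=
  is2step eps s i && ~~ bad2step s i.

Definition case2 (eps : int) (s : seq nat) (i : nat) : bool :=
  is2step eps s i && (part s i == part s i.+1).

Definition lam_i (s : seq nat) (i : nat) : seq nat :=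
  filter (fun x => 0 < x)%N
    [seq (let k := j.+1 in
          if (k < i)%N then part s k - 2
          else if (k == i) || (k == i.+1) then part s k - 1
          else part s k)
    | j <- iota 0 (size s)].

(* Main.v *)
Require Import Defs.
From mathcomp Require Import all_boot all_order all_algebra.
From mathcomp Require Import zify.
Import GRing.Theory Num.Theory.

Definition qf (p : nat -> nat) (i k : nat) : nat :=
  if k == 0 then 0 else if k < i then p k - 2 else if (k==i)||(k==i.+1) then p k - 1 else p k.
Section S.
Variables (p : nat -> nat) (i : nat) (p0 : p 0 = 0).
Lemma qlt k : k < i -> qf p i k = p k - 2.
Proof. rewrite /qf; case: k => [|k] /= h; first by rewrite p0. by rewrite h. Qed.
Lemma qi : 0 < i -> qf p i i = p i - 1.
Proof. rewrite /qf; case: i => // n _ /=. by rewrite ltnn eqxx. Qed.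
Lemma qi1 : qf p i i.+1 = p i.+1 - 1.
Proof. by rewrite /qf /= ltnNge leqnSn /= eqxx orbT. Qed.
Lemma qgt k : i.+1 < k -> qf p i k = p k.
Proof. rewrite /qf => h. have -> : (k == 0) = false by lia.
have -> : (k < i) = false by lia. by have -> : (k == i) || (k == i.+1) = false by lia. Qed.
End S.

Lemma core (b:bool) (p : nat->nat) (i j : nat) :
 p 0 = 0 ->
 (forall a c, 0 < a <= c -> p c <= p a) ->
 1 <= i -> 0 < p i.+1 -> odd (p i) = b -> p i = p i.+1 -> p i.-1 != p i -> p i.+1 != p i.+2 ->
 [&& 1<=j, 0 < qf p i j.+1, odd (qf p i j) == b, odd (qf p i j.+1) == b, qf p i j.-1 != qf p i j & qf p i j.+1 != qf p i j.+2] =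
 [&& 1<=j, 0 < p j.+1, odd (p j)==b, odd (p j.+1)==b, p j.-1 != p j, p j.+1 != p j.+2 & j != i].
Proof.
move=> p0 mono i1 pos ob eqi ne1 ne2.
case: (posnP j) => [->|j1] //.
have mJ : p j.+1 <= p j by apply: mono; lia.
have mJ2 : p j.+2 <= p j.+1 by apply: mono; lia.
have mJ3 : p j.+3 <= p j.+2 by apply: mono; lia.
have mJm : j.-1 = 0 \/ p j <= p j.-1 by case: (ltnP 1 j) => h; [right; apply: mono|left]; lia.
have mi2 : p i.+2 <= p i.+1 by apply: mono; lia.
have mi1 : i.-1 = 0 \/ p i <= p i.-1 by case: (ltnP 1 i) => h; [right; apply: mono|left]; lia.

rewrite /=.
have : j.+2 < i \/ j.+2 = i \/ j.+1 = i \/ j = i \/ j = i.+1 \/ j = i.+2 \/ i.+2 < j by lia.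
case=> [h|[h|[h|[h|[h|[h|h]]]]]].
- have h2 : j.+1 < i by lia. have h4 : j < i by lia. have h5 : j.-1 < i by lia.
  have mm : p i.-1 <= p j.+1 by apply: mono; lia.
  rewrite !qlt //. 
  have ne : j != i by lia. rewrite ne andbT.
  case: b ob => ob; rewrite ?eqb_id ?eqbF_neg;
  apply/idP/idP; move=> /and5P[x1 x2 x3 x4 x5]; apply/and5P; split; lia.
- subst i. move: ne1 mi1 => /= ne1 mi1.
  have e0 : qf p j.+2 j.-1 = p j.-1 - 2 by rewrite qlt //; lia.
  have e1 : qf p j.+2 j = p j - 2 by rewrite qlt.
  have e2 : qf p j.+2 j.+1 = p j.+1 - 2 by rewrite qlt.
  have e3 : qf p j.+2 j.+2 = p j.+2 - 1 by rewrite qi.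
  rewrite e0 e1 e2 e3.
  have ne : j != j.+2 by lia. rewrite ne andbT.
  case: b ob => ob; rewrite ?eqb_id ?eqbF_neg;
  apply/idP/idP; move=> /and5P[x1 x2 x3 x4 x5]; apply/and5P; split; lia.
- subst i. move: ne1 mi1 => /= ne1 mi1.
  have e0 : qf p j.+1 j.-1 = p j.-1 - 2 by rewrite qlt //; lia.
  have e1 : qf p j.+1 j = p j - 2 by rewrite qlt.
  have e2 : qf p j.+1 j.+1 = p j.+1 - 1 by rewrite qi.
  have e3 : qf p j.+1 j.+2 = p j.+2 - 1 by rewrite qi1.
  rewrite e0 e1 e2 e3.
  have ne : j != j.+1 by lia. rewrite ne andbT.
  case: b ob => ob; rewrite ?eqb_id ?eqbF_neg;
  apply/idP/idP; move=> /and5P[x1 x2 x3 x4 x5]; exfalso; lia.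
- subst i. move: ne1 mi1 => /= ne1 mi1.
  have e0 : qf p j j.-1 = p j.-1 - 2 by rewrite qlt //; lia.
  have e1 : qf p j j = p j - 1 by rewrite qi.
  have e2 : qf p j j.+1 = p j.+1 - 1 by rewrite qi1.
  have e3 : qf p j j.+2 = p j.+2 by rewrite qgt //; lia.
  rewrite e0 e1 e2 e3.
  case: b ob => ob; rewrite ?eqb_id ?eqbF_neg;
  apply/idP/idP => /and5P[x1 x2 x3 x4 x5]; exfalso; lia.
- subst j.
  have e0 : qf p i i = p i - 1 by rewrite qi.
  have e1 : qf p i i.+1 = p i.+1 - 1 by rewrite qi1.
  have e2 : qf p i i.+2 = p i.+2 by rewrite qgt //; lia.
  have e3 : qf p i i.+3 = p i.+3 by rewrite qgt //; lia.
  rewrite /= e0 e1 e2 e3.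
  case: b ob => ob; rewrite ?eqb_id ?eqbF_neg;
  apply/idP/idP => /and5P[x1 x2 x3 x4 x5]; exfalso; lia.
- subst j.
  have e0 : qf p i i.+1 = p i.+1 - 1 by rewrite qi1.
  have e1 : qf p i i.+2 = p i.+2 by rewrite qgt //; lia.
  have e2 : qf p i i.+3 = p i.+3 by rewrite qgt //; lia.
  have e3 : qf p i i.+4 = p i.+4 by rewrite qgt //; lia.
  rewrite /= e0 e1 e2 e3.
  have ne : i.+2 != i by lia. rewrite ne andbT.
  case: b ob => ob; rewrite ?eqb_id ?eqbF_neg;
  apply/idP/idP; move=> /and5P[x1 x2 x3 x4 x5]; apply/and5P; split; lia.
- have e0 : qf p i j.-1 = p j.-1 by rewrite qgt //; lia.
  have e1 : qf p i j = p j by rewrite qgt //; lia.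
  have e2 : qf p i j.+1 = p j.+1 by rewrite qgt //; lia.
  have e3 : qf p i j.+2 = p j.+2 by rewrite qgt //; lia.
  rewrite e0 e1 e2 e3.
  have ne : j != i by lia. by rewrite ne andbT.
Qed.

Lemma qmono (p : nat->nat) (i k : nat) :
 p 0 = 0 ->
 (forall a c, 0 < a <= c -> p c <= p a) ->
 1 <= i -> p i.-1 != p i -> p i.+1 != p i.+2 -> 1 <= k ->
 qf p i k.+1 <= qf p i k.
Proof.
move=> p0 mono i1 ne1 ne2 k1.
have mK : p k.+1 <= p k by apply: mono; lia.
have mi1 : i.-1 = 0 \/ p i <= p i.-1 by case: (ltnP 1 i) => h; [right; apply: mono|left]; lia.
have mi2 : p i.+2 <= p i.+1 by apply: mono; lia.
have : k.+1 < i \/ k.+1 = i \/ k = i \/ k = i.+1 \/ i.+1 < k by lia.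
case=> [h|[h|[h|[h|h]]]].
- by rewrite !qlt //; lia.
- subst i; rewrite qi // qlt //; move: ne1 mi1 => /= ne1 mi1; lia.
- subst k; rewrite qi // qi1; lia.
- subst k; rewrite qi1 qgt //; lia.
- by rewrite !qgt //; lia.
Qed.

Lemma qterm (p : nat->nat) (i k : nat) :
 p 0 = 0 ->
 (forall a c, 0 < a <= c -> p c <= p a) ->
 1 <= i -> 0 < p i.+1 -> p i = p i.+1 -> p i.-1 != p i -> p i.+1 != p i.+2 ->
 (i = 1 \/ odd (p i.-1 - p i)) -> odd (p i.+1 - p i.+2) -> 1 <= k ->
 (qf p i k - qf p i k.+1) %/ 2 = (p k - p k.+1) %/ 2.
Proof.
move=> p0 mono i1 pos eqi ne1 ne2 g1 g2 k1.
have mK : p k.+1 <= p k by apply: mono; lia.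
have mi1 : i.-1 = 0 \/ p i <= p i.-1 by case: (ltnP 1 i) => h; [right; apply: mono|left]; lia.
have mi2 : p i.+2 <= p i.+1 by apply: mono; lia.
have : k.+1 < i \/ k.+1 = i \/ k = i \/ k = i.+1 \/ i.+1 < k by lia.
case=> [h|[h|[h|[h|h]]]].
- have mm : p i.-1 <= p k.+1 by apply: mono; lia.
  by rewrite !qlt //; lia.
- subst i; rewrite qi // qlt //; move: ne1 mi1 g1 => /= ne1 mi1 g1; lia.
- subst k; rewrite qi // qi1; lia.
- subst k; rewrite qi1 qgt //; lia.
- by rewrite !qgt //; lia.
Qed.

Lemma sgnE (eps : int) (m : nat) : (eps = 1%R \/ eps = (-1)%R) ->
  (sgn eps m == (-1)%R) = (odd m == (eps == 1%R)).
Proof.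
case=> ->; rewrite /sgn -signr_odd; case: (odd m) => /=;
  rewrite ?expr1 ?expr0 ?mul1r ?mulN1r ?opprK //.
Qed.

Lemma size_pos (s : seq nat) j : all (fun x => 0 < x) s -> (j < size s) = (0 < part s j.+1).
Proof.
move=> H /=; case: ltnP => h.
  by rewrite (allP H) // mem_nth.
by rewrite nth_default.
Qed.

Lemma filter0 (t : seq nat) : (forall j, nth 0 t j = 0) -> filter (fun x => 0 < x) t = [::].
Proof.
elim: t => [|x t IH] H //=.
have := H 0 => /= ->; apply: IH => j; exact: (H j.+1).
Qed.

Lemma filter_nth (t : seq nat) : (forall j, nth 0 t j = 0 -> nth 0 t j.+1 = 0) ->
  forall j, nth 0 (filter (fun x => 0 < x) t) j = nth 0 t j.
Proof.
elim: t => [|x t IH] H j //=.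
case: (posnP x) => [x0|xp].
- have Z : forall j, nth 0 t j = 0.
    elim=> [|n IHn]; first exact: (H 0 x0).
    exact: (H n.+1 IHn).
  rewrite x0 /= filter0 // nth_nil; by case: j => //= j; rewrite Z.
- case: j => //= j; apply: IH => n; exact: (H n.+1).
Qed.

Lemma partq (lam : seq nat) (i : nat) :
  (forall j, qf (part lam) i j.+1 = 0 -> qf (part lam) i j.+2 = 0) ->
  forall k, part (lam_i lam i) k = qf (part lam) i k.
Proof.
move=> H [|k] //.
have E : forall j, nth 0 [seq (let k := j.+1 in
          if (k < i)%N then part lam k - 2
          else if (k == i) || (k == i.+1) then part lam k - 1
          else part lam k)
    | j <- iota 0 (size lam)] j = qf (part lam) i j.+1.
  move=> j; case: (ltnP j (size lam)) => h.
    by rewrite (nth_map 0) ?size_iota // nth_iota.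
  rewrite nth_default ?size_map ?size_iota //.
  have Z : nth 0 lam j = 0 by rewrite nth_default.
  rewrite /qf /= Z; case: ifP => //; case: ifP => //.
rewrite /= /lam_i filter_nth ?E //.
move=> j; rewrite !E; exact: H.
Qed.

Lemma sfun_ext (s : seq nat) M : size s <= M ->
  sfun s = \sum_(1 <= k < M.+1) ((part s k - part s k.+1) %/ 2).
Proof.
move=> h; rewrite /sfun (@big_cat_nat _ _ _ (size s).+1 1 M.+1) //=.
suff -> : \sum_((size s).+1 <= k < M.+1) ((part s k - part s k.+1) %/ 2) = 0 by rewrite addn0.
rewrite big_nat_cond big1 // => k /andP[/andP[h1 h2] _].
case: k h1 h2 => // k h1 h2 /=.
rewrite !nth_default //; lia.
Qed.

Theorem mainTheorem8 (eps : int) (N : nat) (lam : seq nat) (i : nat) :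
  (eps = 1%R \/ eps = (-1)%R) ->
  inP eps N lam ->
  case2 eps lam i ->
  (forall j : nat, is2step eps (lam_i lam i) j <-> (is2step eps lam j /\ j <> i))
  /\ (good2step eps lam i -> sfun (lam_i lam i) = sfun lam).
Proof.
move=> heps [srt lpos _ _] c2.
set p := part lam.
have p0 : p 0 = 0 by [].
have mono : forall a c, 0 < a <= c -> p c <= p a.
  move=> [|a] [|c] //= h.
  case: (ltnP c (size lam)) => hc; last by rewrite (nth_default 0 hc).
  have tr : transitive geq by move=> x y z /= h1 h2; exact: leq_trans h2 h1.
  have rf : reflexive geq by move=> x /=.
  apply: (sorted_leq_nth tr rf 0 srt) => //=; rewrite ?inE /=; lia.
move: (c2); rewrite /case2 {1}/is2step => /andP[/and5P[i1 hsz s1 s2 /andP[ne1 ne2]] /eqP eqi].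
rewrite (sgnE _ _ heps) in s1 s2.
rewrite (size_pos _ _ lpos) in hsz.
set b := (eps == 1%R) in s1 s2.
have ob : odd (p i) = b by apply/eqP.
have hq : forall k, part (lam_i lam i) k = qf p i k.
  apply: partq => j h.
  have := @qmono p i j.+1 p0 mono i1 ne1 ne2 (ltn0Sn j).
  rewrite -/p in h *; lia.
have mpos : all (fun x => 0 < x) (lam_i lam i) by apply: filter_all.
split.
- move=> j.
  have C := @core b p i j p0 mono i1 hsz ob eqi ne1 ne2.
  rewrite /is2step !(sgnE _ _ heps) (size_pos _ _ mpos) (size_pos _ _ lpos) !hq -/b C.
  split.
    case/and5P=> h1 h2 h3 h4 /andP[h5 /andP[h6 /eqP h7]]; split => //; apply/and5P; split => //; exact/andP.
  case=> /and5P[h1 h2 h3 h4 /andP[h5 h6]] h7; apply/and5P; split => //; apply/andP; split => //; apply/andP; split => //; exact/eqP.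
- case/andP=> _; rewrite /bad2step negb_or negb_and -/p => /andP[g1 g2].
  rewrite negbK in g2.
  have g1' : i = 1 \/ odd (p i.-1 - p i).
    by case/orP: g1 => [h|h]; [left; lia| right; rewrite negbK in h].
  have sz : size (lam_i lam i) <= size lam.
    by rewrite /lam_i size_filter (leq_trans (count_size _ _)) // size_map size_iota.
  rewrite (sfun_ext _ _ sz) (sfun_ext _ _ (leqnn _)).
  apply: eq_big_nat => k /andP[k1 _].
  rewrite !hq; exact: qterm.
Qed.
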